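(* Suppose the bandwidth is insufficient, i.e. $BW_{max,EUT}\le\sum_{i\in S_{EUT}}\bar F^{-1}_{B_i}(\lambda_i;b^* )$ with $\lambda_i=w^{-1}(r_{EUT}(b^* )/h_i(b^* ))$, and consider bandwidth reallocation: the SP offers the same rate $b^*$ to the same set $S_{EUT}$ and may choose any allocation $(BW'_i)_{i\in S_{EUT}}$, $BW'_i\ge0$, with $\sum_i BW'_i=BW_{max,EUT}$, and any price $r'$. For such an allocation let $L(BW'):=\max_{i\in S_{EUT}}\{r_{EUT}(b^* )-h_i(b^* )w(\bar F_{B_i}(b^*;BW'_i))\}$. Then (i) $\inf_{BW'}L(BW')\le L(BW_{EUT})=L_{RRM}$, so allowing reallocation does not increase the minimal revenue loss compared with the strict constraints; and (ii) for every admissible allocation $BW'$, $L(BW')\ge0$; equivalently, there is no admissible allocation and price $r'\ge r_{EUT}(b^* )$ at which all users in $S_{EUT}$ accept under prospect theory. In particular the EUT revenue cannot be fully recovered by bandwidth reallocation.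
   Context: A service provider (SP) serves a finite set $S_{EUT}$ of end-users. For each user $i$ there is a benefit function $h_i:(0,\infty)\to(0,\infty)$ and, for each rate $b>0$, a service-guarantee function $BW\mapsto\bar F_{B_i}(b;BW)$ from $[0,\infty)$ to $[0,1)$, continuous and strictly increasing with $\bar F_{B_i}(b;0)=0$. The EUT pricing function is $r_{EUT}:(0,\infty)\to(0,\infty)$. A probability weighting function $w:[0,1]\to[0,1]$ is a continuous strictly increasing bijection (e.g. Prelec's $w(p)=\exp(-(-\ln p)^\alpha)$, $\alpha\in(0,1]$). A user offered rate $b$ at price $r$ with bandwidth $BW_i$ accepts under EUT iff $h_i(b)\bar F_{B_i}(b;BW_i)>r$, and under prospect theory (PT) iff $h_i(b)\,w(\bar F_{B_i}(b;BW_i))>r$. Notation: for $q\ge0$, $\bar F^{-1}_{B_i}(q;b)$ is the unique $BW\ge0$ with $\bar F_{B_i}(b;BW)=q$ if $q$ lies in the range of $\bar F_{B_i}(b;\cdot)$ and $+\infty$ otherwise; $w^{-1}(x):=+\infty$ for $x>1$ and $\bar F^{-1}_{B_i}(+\infty;b):=+\infty$. EUT equilibrium data: a rate $b^*=b^*_{1,EUT}>0$ and bandwidths $BW_{EUT}=(BW_{i,EUT})_{i\in S_{EUT}}$, $BW_{i,EUT}\ge0$, with $\sum_{i}BW_{i,EUT}=BW_{max,EUT}$, such that every $i\in S_{EUT}$ accepts under EUT the offer of rate $b^*$ at price $r_{EUT}(b^* )$ with bandwidth $BW_{i,EUT}$. $L_{RRM}:=\max_{i\in S_{EUT}}\{r_{EUT}(b^*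 )-h_i(b^* )w(\bar F_{B_i}(b^*;BW_{i,EUT}))\}$. *)

(* Defs.v *)
From Stdlib Require Import Reals List.
Open Scope R_scope.

(* Users of S_EUT are indexed by 0..n-1. *)

Definition sumU (n : nat) (f : nat -> R) : R :=
  fold_right Rplus 0 (map f (seq 0 n)).

(* max_{i<n} f i  (meaningful for n >= 1) *)
Definition maxU (n : nat) (f : nat -> R) : R :=
  fold_right Rmax (f 0%nat) (map f (seq 0 n)).

Definition continuous_on (D : R -> Prop) (f : R -> R) : Prop :=
  forall x, D x -> forall eps, 0 < eps -> exists delta, 0 < delta /\
    forall y, D y -> Rabs (y - x) < delta -> Rabs (f y - f x) < eps.

Definition strictly_increasing_on (D : R -> Prop) (f : R -> R) : Prop :=
  forall x y, D x -> D y -> x < y -> f x < f y.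

Definition unit_interval (p : R) : Prop := 0 <= p <= 1.
Definition nonneg (x : R) : Prop := 0 <= x.

Definition prob_weighting (w : R -> R) : Prop :=
  (forall p, unit_interval p -> unit_interval (w p)) /\
  (forall q, unit_interval q -> exists p, unit_interval p /\ w p = q) /\
  strictly_increasing_on unit_interval w /\
  continuous_on unit_interval w.

Definition service_guarantee (F : R -> R -> R) : Prop :=
  forall b, 0 < b ->
    (forall BW, 0 <= BW -> 0 <= F b BW < 1) /\
    continuous_on nonneg (F b) /\
    strictly_increasing_on nonneg (F b) /\
    F b 0 = 0.

Definition admissible (n : nat) (BWmax : R) (BW : nat -> R) : Prop :=
  (forall i, (i < n)%nat -> 0 <= BW i) /\ sumU n BW = BWmax.

(* t is the finite value of  Fbar^{-1}_{B_i}(lambda_i; b)  where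
   lambda_i = w^{-1}(r / h_i(b)):  lambda_i is a genuine value in [0,1]
   with w lambda_i = r/h_i(b), and t >= 0 with F_i(b; t) = lambda_i.
   If no such t exists the threshold is +infinity. *)
Definition finite_threshold (w : R -> R) (h : nat -> R -> R)
    (F : nat -> R -> R -> R) (r b : R) (i : nat) (t : R) : Prop :=
  0 <= t /\ exists lam, unit_interval lam /\ w lam = r / h i b /\ F i b t = lam.

(* Insufficient bandwidth: BWmax <= sum_i Fbar^{-1}(lambda_i; b) in the
   extended reals.  If some threshold is +infinity the sum is +infinity and
   the condition holds; otherwise thresholds are unique finite reals. *)
Definition insufficient_bandwidth (n : nat) (w : R -> R) (h : nat -> R -> R)
    (F : nat -> R -> R -> R) (r b BWmax : R) : Prop :=
  forall ts : nat -> R,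
    (forall i, (i < n)%nat -> finite_threshold w h F r b i (ts i)) ->
    BWmax <= sumU n ts.

Definition loss (n : nat) (w : R -> R) (h : nat -> R -> R)
    (F : nat -> R -> R -> R) (r b : R) (BW : nat -> R) : R :=
  maxU n (fun i => r - h i b * w (F i b (BW i))).

(* Main.v *)
Require Import Defs.
From Stdlib Require Import Reals List Lra Lia ClassicalEpsilon.
Open Scope R_scope.

Lemma cont_ext (f : R -> R) : continuous_on Defs.nonneg f ->
  continuity (fun x => f (Rmax 0 x)).
Proof.
  intros Hc x eps Heps.
  destruct (Hc (Rmax 0 x) (Rmax_l 0 x) eps Heps) as [d [Hd Hy]].
  exists d; split; [lra|]. intros y [_ Hyx]. simpl in *. unfold R_dist in *.
  apply Hy. apply Rmax_l.
  eapply Rle_lt_trans; [|exact Hyx].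
  unfold Rmax; destruct (Rle_dec 0 y), (Rle_dec 0 x);
  unfold Rabs; repeat destruct Rcase_abs; lra.
Qed.

Lemma sum_lt (l : list nat) (f g : nat -> R) : l <> nil ->
  (forall x, In x l -> f x < g x) ->
  fold_right Rplus 0 (map f l) < fold_right Rplus 0 (map g l).
Proof.
  induction l as [|a l IH]; intros Hne H; [congruence|].
  simpl. destruct l as [|b l'].
  - simpl. specialize (H a (or_introl eq_refl)). lra.
  - assert (H1 := H a (or_introl eq_refl)).
    assert (H2 : fold_right Rplus 0 (map f (b :: l')) < fold_right Rplus 0 (map g (b :: l'))).
    { apply IH; [discriminate|]. intros x Hx; apply H; right; exact Hx. }
    lra.
Qed.

Lemma max_ge (l : list nat) (f : nat -> R) d x : In x l ->
  f x <= fold_right Rmax d (map f l).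
Proof.
  induction l as [|a l IH]; intros Hx; [destruct Hx|].
  simpl. destruct Hx as [<-|Hx].
  - apply Rmax_l.
  - eapply Rle_trans; [apply IH; exact Hx| apply Rmax_r].
Qed.

Lemma core
  (n : nat) (Hn : (0 < n)%nat)
  (h : nat -> R -> R) (F : nat -> R -> R -> R)
  (rEUT : R -> R) (w : R -> R)
  (Hh : forall i b, (i < n)%nat -> 0 < b -> 0 < h i b)
  (HF : forall i, (i < n)%nat -> service_guarantee (F i))
  (Hr : forall b, 0 < b -> 0 < rEUT b)
  (Hw : prob_weighting w)
  (bstar BWmax : R)
  (Hb : 0 < bstar)
  (Hins : insufficient_bandwidth n w h F (rEUT bstar) bstar BWmax)
  (BW' : nat -> R) (Hadm : admissible n BWmax BW') :
  ~ (forall i, (i < n)%nat -> h i bstar * w (F i bstar (BW' i)) > rEUT bstar).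
Proof.
  intros Hall.
  destruct Hw as [Hw01 [Hsurj [Hinc _]]].
  destruct Hadm as [Hnn Hsum].
  assert (Hex : forall i, (i < n)%nat -> exists t, finite_threshold w h F (rEUT bstar) bstar i t
                 /\ t < BW' i).
  { intros i Hi.
    destruct (HF i Hi bstar Hb) as [Hrange [Hcont [Hsi HF0]]].
    pose proof (Hh i bstar Hi Hb) as Hhi. pose proof (Hr bstar Hb) as Hrb.
    pose proof (Hall i Hi) as Ha.
    pose proof (Hrange (BW' i) (Hnn i Hi)) as HFr.
    assert (HFu : unit_interval (F i bstar (BW' i))) by (unfold unit_interval; lra).
    pose proof (Hw01 _ HFu) as Hwu. unfold unit_interval in Hwu.
    set (q := rEUT bstar / h i bstar).
    assert (Hq : q < w (F i bstar (BW' i))).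
    { unfold q. apply (Rmult_lt_reg_l (h i bstar)); [lra|].
      field_simplify; [lra|lra]. }
    assert (Hq0 : 0 < q) by (unfold q; apply Rdiv_lt_0_compat; lra).
    destruct (Hsurj q) as [lam [Hlu Hwl]]; [unfold unit_interval; lra|].
    assert (Hlt : lam < F i bstar (BW' i)).
    { destruct (Rlt_le_dec lam (F i bstar (BW' i))) as [?|Hle]; [assumption|].
      destruct Hle as [Hle|Heq].
      - pose proof (Hinc _ _ HFu Hlu Hle). lra.
      - rewrite Heq, Hwl in Hq. lra. }
    unfold unit_interval in Hlu.
    assert (HBpos : 0 < BW' i).
    { destruct (Hnn i Hi) as [?|H0]; [assumption|]. rewrite <- H0, HF0 in Hlt. lra. }
    destruct (Req_dec lam 0) as [Hl0|Hl0].
    - exists 0. split; [split; [lra|]; exists lam; split; [unfold unit_interval; lra|split; [exact Hwl|rewrite HF0; lra]]|lra].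
    - pose (g := fun x => F i bstar (Rmax 0 x) - lam).
      assert (Hgc : continuity g).
      { unfold g. apply continuity_minus; [apply cont_ext; exact Hcont|apply continuity_const; intros ? ?; reflexivity]. }
      assert (Hg0 : g 0 < 0).
      { unfold g. rewrite Rmax_left by lra. rewrite HF0. lra. }
      assert (Hg1 : 0 < g (BW' i)).
      { unfold g. rewrite Rmax_right by lra. lra. }
      destruct (IVT g 0 (BW' i) Hgc HBpos Hg0 Hg1) as [z [Hz Hgz]].
      unfold g in Hgz. rewrite Rmax_right in Hgz by lra.
      exists z. split.
      + split; [lra|]. exists lam. split; [unfold unit_interval; lra|split; [exact Hwl|lra]].
      + destruct Hz as [_ [Hz|Hz]]; [assumption|].
        rewrite Hz in Hgz. lra. }
  assert (Hts : exists ts : nat -> R, forall i, (i < n)%nat ->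
      finite_threshold w h F (rEUT bstar) bstar i (ts i) /\ ts i < BW' i).
  { pose (ts := fun i => match Compare_dec.lt_dec i n with
      | left Hi => proj1_sig (constructive_indefinite_description _ (Hex i Hi))
      | right _ => 0 end).
    exists ts. intros i Hi. unfold ts. destruct (Compare_dec.lt_dec i n) as [Hi'|]; [|lia].
    apply (proj2_sig (constructive_indefinite_description _ (Hex i Hi'))). }
  destruct Hts as [ts Hts].
  assert (H1 : BWmax <= sumU n ts) by (apply Hins; intros i Hi; apply Hts, Hi).
  assert (H2 : sumU n ts < sumU n BW').
  { unfold sumU. apply sum_lt.
    - destruct n; [lia|]. simpl. discriminate.
    - intros x Hx. apply in_seq in Hx. apply Hts. lia. }
  lra.
Qed.

Theorem theorem4
  (n : nat) (Hn : (0 < n)%nat)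
  (h : nat -> R -> R) (F : nat -> R -> R -> R)
  (rEUT : R -> R) (w : R -> R)
  (Hh : forall i b, (i < n)%nat -> 0 < b -> 0 < h i b)
  (HF : forall i, (i < n)%nat -> service_guarantee (F i))
  (Hr : forall b, 0 < b -> 0 < rEUT b)
  (Hw : prob_weighting w)
  (bstar BWmax : R) (BWEUT : nat -> R)
  (Hb : 0 < bstar)
  (HBW : admissible n BWmax BWEUT)
  (Hacc : forall i, (i < n)%nat ->
            h i bstar * F i bstar (BWEUT i) > rEUT bstar)
  (Hins : insufficient_bandwidth n w h F (rEUT bstar) bstar BWmax) :
  (forall m, (forall BW', admissible n BWmax BW' ->
                m <= loss n w h F (rEUT bstar) bstar BW') ->
             m <= loss n w h F (rEUT bstar) bstar BWEUT) /\
  (forall BW', admissible n BWmax BW' ->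
     0 <= loss n w h F (rEUT bstar) bstar BW') /\
  (~ (exists BW' r', admissible n BWmax BW' /\ r' >= rEUT bstar /\
       forall i, (i < n)%nat -> h i bstar * w (F i bstar (BW' i)) > r')).
Proof.
  split; [intros m Hm; apply Hm, HBW|]. split.
  - intros BW' Hadm.
    destruct (Rle_lt_dec 0 (loss n w h F (rEUT bstar) bstar BW')) as [?|Hlt]; [assumption|].
    exfalso. apply (core n Hn h F rEUT w Hh HF Hr Hw bstar BWmax Hb Hins BW' Hadm).
    intros i Hi.
    assert (Hle : rEUT bstar - h i bstar * w (F i bstar (BW' i)) <= loss n w h F (rEUT bstar) bstar BW').
    { unfold loss, maxU.
      apply (max_ge (seq 0 n) (fun i => rEUT bstar - h i bstar * w (F i bstar (BW' i)))).
      apply in_seq. lia. }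
    lra.
  - intros [BW' [r' [Hadm [Hr' Hall]]]].
    apply (core n Hn h F rEUT w Hh HF Hr Hw bstar BWmax Hb Hins BW' Hadm).
    intros i Hi. specialize (Hall i Hi). lra.
Qed.
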